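(* Let $\mathcal{F}$ be a finite family of constraints and $\mathcal{F}^\perp=\{g^\perp\mid g\in\mathcal{F}\}$. If $\mathcal{F}^\perp$ pins $\ell_0$ then $\mathcal{F}$ pins $\ell_0$. If $\mathcal{F}$ pins $\ell_0$ and no four constraints in $\mathcal{F}$ are dependent, then $\mathcal{F}^\perp$ pins $\ell_0$.
   Context: All lines are oriented. For non-parallel oriented lines $\ell_1,\ell_2$ with directions $d_1,d_2$, $\ell_2$ passes to the right of $\ell_1$ if $\ell_2$ can be translated by a positive multiple of $d_1\times d_2$ to meet $\ell_1$. Coordinates are chosen so that $\ell_0$ is the $z$-axis. A constraint is an oriented line meeting $\ell_0$ in exactly one point; a line satisfies a constraint $g$ if it meets $g$ or passes to the right of $g$. A family of constraints pins $\ell_0$ if there is a neighborhood of $\ell_0$ in the space of oriented lines in which $\ell_0$ is the only line satisfying all its constraints. $g(\lambda,\alpha,\delta)$ denotes the constraint through $(0,0,\lambda)$ and $(\cos\alpha,\sin\alpha,\lambda+\delta)$, oriented from the first to the second point (every constraint has this form). The orthogonalized constraint of $g=g(\lambda,\alpha,\delta)$ is $g^\perp=g(\lambda,\alpha,0)$ (the projection of $g$ onto the plane orthogonal to $\ell_0$ through $g\cap\ell_0$). The normal of $g(\lambda,\alpha,\delta)$ is $\eta_g=\big((1-\lambda)\sin\alpha,-(1-\lambda)\cos\alpha,\lambda\sin\alpha,-\lambda\cos\alpha\big)$; a family of constraints is dependent if their normals are linearly dependent. *)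

(* Defs.v *)
From Stdlib Require Import Reals List.
Open Scope R_scope.

Record vec3 := V3 { vx : R; vy : R; vz : R }.

Definition vadd (a b : vec3) : vec3 := V3 (vx a + vx b) (vy a + vy b) (vz a + vz b).
Definition vscale (c : R) (a : vec3) : vec3 := V3 (c * vx a) (c * vy a) (c * vz a).
Definition cross (a b : vec3) : vec3 :=
  V3 (vy a * vz b - vz a * vy b) (vz a * vx b - vx a * vz b) (vx a * vy b - vy a * vx b).

(* An oriented line is represented by a point and a nonzero direction vector;
   two representations denote the same oriented line iff [same_oline]. *)
Record oline := OLine { lpt : vec3; ldir : vec3 }.

Definition same_oline (l1 l2 : oline) : Prop :=
  (exists c, 0 < c /\ ldir l2 = vscale c (ldir l1)) /\
  (exists t, lpt l2 = vadd (lpt l1) (vscale t (ldir l1))).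

Definition parallel (l1 l2 : oline) : Prop := cross (ldir l1) (ldir l2) = V3 0 0 0.

Definition meets (l1 l2 : oline) : Prop :=
  exists t u, vadd (lpt l1) (vscale t (ldir l1)) = vadd (lpt l2) (vscale u (ldir l2)).

Definition passes_right (l2 l1 : oline) : Prop :=
  ~ parallel l1 l2 /\
  exists s, 0 < s /\
    meets (OLine (vadd (lpt l2) (vscale s (cross (ldir l1) (ldir l2)))) (ldir l2)) l1.

Definition l0 : oline := OLine (V3 0 0 0) (V3 0 0 1).

(* Constraint parameters (lambda, alpha, delta). *)
Definition cparams := (R * R * R)%type.

Definition gline (g : cparams) : oline :=
  let '(lam, al, de) := g in OLine (V3 0 0 lam) (V3 (cos al) (sin al) de).

Definition satisfies (l : oline) (g : cparams) : Prop :=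
  meets l (gline g) \/ passes_right l (gline g).

Definition orth (g : cparams) : cparams := let '(lam, al, _) := g in (lam, al, 0).

Definition normal (g : cparams) : R * R * R * R :=
  let '(lam, al, _) := g in
  ((1 - lam) * sin al, - (1 - lam) * cos al, lam * sin al, - lam * cos al).

Definition indep4 (a b c d : R * R * R * R) : Prop :=
  forall k1 k2 k3 k4 : R,
    (let '(a1, a2, a3, a4) := a in let '(b1, b2, b3, b4) := b in
     let '(c1, c2, c3, c4) := c in let '(d1, d2, d3, d4) := d in
     k1 * a1 + k2 * b1 + k3 * c1 + k4 * d1 = 0 /\
     k1 * a2 + k2 * b2 + k3 * c2 + k4 * d2 = 0 /\
     k1 * a3 + k2 * b3 + k3 * c3 + k4 * d3 = 0 /\
     k1 * a4 + k2 * b4 + k3 * c4 + k4 * d4 = 0) ->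
    k1 = 0 /\ k2 = 0 /\ k3 = 0 /\ k4 = 0.

(* Neighborhoods of l0 are described through representatives
   (p, d) with p near 0 and d near e3 (the quotient map to oriented lines is open). *)
Definition pins (F : list cparams) : Prop :=
  exists eps, 0 < eps /\
    forall p d : vec3,
      Rabs (vx p) < eps -> Rabs (vy p) < eps -> Rabs (vz p) < eps ->
      Rabs (vx d) < eps -> Rabs (vy d) < eps -> Rabs (vz d - 1) < eps ->
      (forall g, In g F -> satisfies (OLine p d) g) ->
      same_oline (OLine p d) l0.

Definition no_four_dependent (F : list cparams) : Prop :=
  forall g1 g2 g3 g4, In g1 F -> In g2 F -> In g3 F -> In g4 F ->
    ~ same_oline (gline g1) (gline g2) -> ~ same_oline (gline g1) (gline g3) ->
    ~ same_oline (gline g1) (gline g4) -> ~ same_oline (gline g2) (gline g3) ->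
    ~ same_oline (gline g2) (gline g4) -> ~ same_oline (gline g3) (gline g4) ->
    indep4 (normal g1) (normal g2) (normal g3) (normal g4).

(* Main.v *)
Require Import Defs.
From Stdlib Require Import Reals List Lra Psatz Classical.
From HB Require Import structures.
From mathcomp Require all_boot all_order all_algebra all_classical all_reals all_analysis ring lra Rstruct Rstruct_topology.
Open Scope R_scope.

Definition d4 (a : R*R*R*R) (x0 y0 x1 y1 : R) : R :=
  let '(a1,a2,a3,a4) := a in a1*x0+a2*y0+a3*x1+a4*y1.

Module MC.
From HB Require Import structures.
From mathcomp Require Import all_boot all_order all_algebra.
From mathcomp Require Import all_classical all_reals all_analysis.
From mathcomp Require Import ring lra Rstruct Rstruct_topology.
Import Order.TTheory GRing.Theory Num.Theory.
Import numFieldNormedType.Exports.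
Set Implicit Arguments. Unset Strict Implicit.
Local Open Scope classical_set_scope.
Local Open Scope ring_scope.

Section GEN.
Variable R : realType.

Definition i0 : 'I_4 := @Ordinal 4 0 isT.
Definition i1 : 'I_4 := @Ordinal 4 1 isT.
Definition i2 : 'I_4 := @Ordinal 4 2 isT.
Definition i3 : 'I_4 := @Ordinal 4 3 isT.
Definition dt (a : R*R*R*R) (v : 'rV[R]_4) : R :=
  a.1.1.1 * v ord0 i0 + a.1.1.2 * v ord0 i1 + a.1.2 * v ord0 i2 + a.2 * v ord0 i3.

Lemma dt_cont a : continuous (dt a).
Proof.
move=> v; rewrite /dt.
have hc : forall (k : R) (i : 'I_4), {for v, continuous (fun w : 'rV[R]_4 => k * w ord0 i)}.
  move=> k i; apply: (@continuousM _ _ (fun=> k) (fun w : 'rV[R]_4 => w ord0 i)).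
    exact: cst_continuous.
  exact: coord_continuous.
apply: (@continuousD _ _ _ (fun w => _ + _ + _) (fun w : 'rV[R]_4 => a.2 * w ord0 i3)) => //.
apply: (@continuousD _ _ _ (fun w => _ + _) (fun w : 'rV[R]_4 => a.1.2 * w ord0 i2)) => //.
exact: (@continuousD _ _ _ (fun w : 'rV[R]_4 => a.1.1.1 * w ord0 i0) (fun w : 'rV[R]_4 => a.1.1.2 * w ord0 i1)).
Qed.

Lemma dtZ a k v : dt a (k *: v) = k * dt a v.
Proof. rewrite /dt !mxE; ring. Qed.

Fixpoint fm (a0 : R*R*R*R) (l : seq (R*R*R*R)) (v : 'rV[R]_4) : R :=
  match l with [::] => dt a0 v | a :: l' => Num.max (dt a v) (fm a0 l' v) end.

Lemma fm_cont a0 l : continuous (fm a0 l).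
Proof.
elim: l => [|a l IH] /=; first exact: dt_cont.
move=> v; apply: (@continuous_max _ _ (dt a) (fm a0 l)); [exact: dt_cont|exact: IH].
Qed.

Lemma fm_ex a0 l v : exists a, List.In a (a0 :: l) /\ fm a0 l v = dt a v.
Proof.
elim: l => [|a l [b [bin IH]]] /=; first by exists a0; split; [left|].
case: (leP (dt a v) (fm a0 l v)) => _.
  exists b; split => //; case: bin => [->|?]; [left|right; right] => //.
by exists a; split => //; right; left.
Qed.

Lemma fm_ge a0 l v a : List.In a (a0 :: l) -> dt a v <= fm a0 l v.
Proof.
elim: l => [|b l IH] /=; first by case=> [->|[]].
move=> H; rewrite le_max; apply/orP.
case: H => [E|[E|H]].
- by right; apply: IH; left.
- by left; rewrite E.
- by right; apply: IH; right.
Qed.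

Lemma fmZ a0 l k v : 0 <= k -> fm a0 l (k *: v) = k * fm a0 l v.
Proof.
move=> k0; elim: l => [|a l IH] /=; first exact: dtZ.
by rewrite IH dtZ maxr_pMr.
Qed.



Lemma mc_bound a0 l : (forall v : 'rV[R]_4, v != 0 -> 0 < fm a0 l v) ->
  exists2 c : R, 0 < c & forall v, c * `|v| <= fm a0 l v.
Proof.
move=> Hpos.
pose K := [set v : 'rV[R]_4 | `|v| = 1].
have bK : bounded_set K.
  exists 1; split => // M M1 x /= ->; exact: ltW.
have clK : closed K.
  apply: (@preimage_closed _ _ (fun v : 'rV[R]_4 => `|v|) [set 1]).
    by move=> x _; apply: norm_continuous.
  exact: closed_eq.
have cK : compact K by apply: bounded_closed_compact.
have u0 : (const_mx 1 : 'rV[R]_4) != 0.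
  apply/eqP => /matrixP/(_ ord0 ord0); rewrite !mxE; apply/eqP; exact: oner_neq0.
have K0 : K !=set0.
  exists (`|const_mx 1 : 'rV[R]_4|^-1 *: const_mx 1).
  by rewrite /K /= normrZ normrV ?unitfE ?normr_eq0 // normr_id mulVf // normr_eq0.
have [c0 c0K Hmin] := compact_EVT_min K0 cK (continuous_subspaceT (@fm_cont a0 l)).
have c0n : c0 != 0.
  by move: c0K; rewrite inE /K /= => H; apply/eqP => E; move: H; rewrite E normr0 => /eqP; rewrite eq_sym oner_eq0.
exists (fm a0 l c0); first exact: Hpos.
move=> v; have [->|vn] := eqVneq v 0.
  by rewrite normr0 mulr0 -(scale0r (0 : 'rV[R]_4)) fmZ // mul0r.
have nv : 0 < `|v| by rewrite normr_gt0.
have wK : (`|v|^-1 *: v) \in K.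
  by rewrite inE /K /= normrZ normrV ?unitfE ?normr_eq0 // normr_id mulVf // normr_eq0.
have H := Hmin _ wK; rewrite fmZ in H; last by rewrite invr_ge0 ltW.
rewrite -ler_pdivlMr //; by rewrite mulrC.
Qed.


Lemma norm_coord (v : 'rV[R]_4) (i : 'I_4) : `|v ord0 i| <= `|v|.
Proof.
have /mapP[j Hj ->] : `|v ord0 i| \in [seq `|v x.1 x.2| | x : 'I_1 * 'I_4].
  by apply/mapP; exists (ord0, i) => //=; rewrite mem_enum.
by rewrite [leRHS]/Num.Def.normr /= mx_normrE; apply/bigmax_geP; right => /=; exists j.
Qed.

End GEN.

Definition coef (a : R*R*R*R) (j : nat) : R :=
  let '(a1,a2,a3,a4) := a in match j with 0 => a1 | 1 => a2 | 2 => a3 | _ => a4 end.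
Definition sel (a b c d : R*R*R*R) (i : nat) := match i with 0 => a | 1 => b | 2 => c | _ => d end.
Definition Mx (a b c d : R*R*R*R) : 'M[R]_4 := \matrix_(i < 4, j < 4) coef (sel a b c d i) j.

Lemma sum4 (f : 'I_4 -> R) : \sum_(i < 4) f i =
  f (@Ordinal 4 0 isT) + f (@Ordinal 4 1 isT) + f (@Ordinal 4 2 isT) + f (@Ordinal 4 3 isT).
Proof.
rewrite !big_ord_recr big_ord0 /= add0r.
by congr (_ + _ + _ + _); congr f; apply: val_inj.
Qed.

Lemma ker_row a b c d (u : 'rV[R]_4) : indep4 a b c d -> u *m Mx a b c d = 0 -> u = 0.
Proof.
move=> Hind Hu; apply/rowP => j.
have E : forall j, (u *m Mx a b c d) ord0 j = 0 by move=> j'; rewrite Hu mxE.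
move: (E (@Ordinal 4 0 isT)) (E (@Ordinal 4 1 isT)) (E (@Ordinal 4 2 isT)) (E (@Ordinal 4 3 isT)).
rewrite !mxE !sum4 !mxE /=; clear Hu E.
case: a Hind => [[[a1 a2] a3] a4]; case: b => [[[b1 b2] b3] b4];
case: c => [[[c1 c2] c3] c4]; case: d => [[[d1 d2] d3] d4] /= Hind.
move=> h1 h2 h3 h4.
have [e1 [e2 [e3 e4]]] := Hind _ _ _ _ (conj h1 (conj h2 (conj h3 h4))).
case: j => [[|[|[|[|m]]]] Hm] /=.
- by rewrite (_ : Ordinal Hm = @Ordinal 4 0 isT) //; apply: val_inj.
- by rewrite (_ : Ordinal Hm = @Ordinal 4 1 isT) //; apply: val_inj.
- by rewrite (_ : Ordinal Hm = @Ordinal 4 2 isT) //; apply: val_inj.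
- by rewrite (_ : Ordinal Hm = @Ordinal 4 3 isT) //; apply: val_inj.
- by [].
Qed.

Lemma Mx_free a b c d : indep4 a b c d -> Mx a b c d \in unitmx.
Proof.
move=> Hind; rewrite -row_free_unit; apply/negPn/negP => Hnf.
have Hk : kermx (Mx a b c d) != 0.
  rewrite -mxrank_eq0 mxrank_ker subn_eq0 -ltnNge.
  by move: Hnf; rewrite /row_free ltn_neqAle rank_leq_row andbT.
have [i Hi] : exists i, row i (kermx (Mx a b c d)) != 0.
  apply/existsP; move: Hk; apply: contraR; rewrite negb_exists => /forallP H.
  by apply/eqP/row_matrixP => i; rewrite row0; apply/eqP; move/negbNE: (H i).
apply/negP: Hi; rewrite negbK; apply/eqP; apply: (@ker_row a b c d _ Hind).
by apply/sub_kermxP; exact: row_sub.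
Qed.

Lemma Mx_entry a b c d (y : 'cV[R]_4) (i : 'I_4) :
  (Mx a b c d *m y) i ord0 = d4 (sel a b c d i) (y (@Ordinal 4 0 isT) ord0)
     (y (@Ordinal 4 1 isT) ord0) (y (@Ordinal 4 2 isT) ord0) (y (@Ordinal 4 3 isT) ord0).
Proof.
rewrite mxE sum4 !mxE /=; case: (sel a b c d i) => [[[a1 a2] a3] a4] /=.
reflexivity.
Qed.

Lemma LA_solve a b c d : indep4 a b c d -> forall c1 c2 c3 c4 : R,
  exists x0 y0 x1 y1, d4 a x0 y0 x1 y1 = c1 /\ d4 b x0 y0 x1 y1 = c2 /\
     d4 c x0 y0 x1 y1 = c3 /\ d4 d x0 y0 x1 y1 = c4.
Proof.
move=> /Mx_free Hu c1 c2 c3 c4.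
pose cv : 'cV[R]_4 := \col_i coef (c1, c2, c3, c4) i.
pose y := invmx (Mx a b c d) *m cv.
have Hy : Mx a b c d *m y = cv by rewrite /y mulmxA mulmxV // mul1mx.
have E := fun i => Mx_entry a b c d y i.
exists (y (@Ordinal 4 0 isT) ord0), (y (@Ordinal 4 1 isT) ord0), (y (@Ordinal 4 2 isT) ord0), (y (@Ordinal 4 3 isT) ord0).
move: (E (@Ordinal 4 0 isT)) (E (@Ordinal 4 1 isT)) (E (@Ordinal 4 2 isT)) (E (@Ordinal 4 3 isT)).
rewrite Hy !mxE /= => <- <- <- <-.
by split; [|split; [|split]].
Qed.

Lemma LA_ker a b c d x0 y0 x1 y1 : indep4 a b c d ->
  d4 a x0 y0 x1 y1 = 0%R -> d4 b x0 y0 x1 y1 = 0%R -> d4 c x0 y0 x1 y1 = 0%R -> d4 d x0 y0 x1 y1 = 0%R ->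
  x0 = 0%R /\ y0 = 0%R /\ x1 = 0%R /\ y1 = 0%R.
Proof.
move=> /Mx_free Hu h1 h2 h3 h4.
pose xv : 'cV[R]_4 := \col_i coef (x0, y0, x1, y1) i.
have H0 : Mx a b c d *m xv = 0.
  apply/colP => i; rewrite Mx_entry !mxE /=.
  case: i => [[|[|[|[|m]]]] Hm] //=.
have : xv = 0 by rewrite -[xv]mul1mx -(mulVmx Hu) -mulmxA H0 mulmx0.
move/colP => E.
move: (E (@Ordinal 4 0 isT)) (E (@Ordinal 4 1 isT)) (E (@Ordinal 4 2 isT)) (E (@Ordinal 4 3 isT)).
by rewrite !mxE /=.
Qed.

Lemma dt_d4 (a : R*R*R*R) (v : 'rV[R]_4) :
  dt a v = d4 a (v ord0 i0) (v ord0 i1) (v ord0 i2) (v ord0 i3).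
Proof. by case: a => [[[a1 a2] a3] a4]. Qed.

Lemma qbound (a0 : R*R*R*R) (l : list (R*R*R*R)) :
  (forall x0 y0 x1 y1 : R, ~ (x0 = 0%R /\ y0 = 0%R /\ x1 = 0%R /\ y1 = 0%R) ->
     exists a, List.In a (a0::l) /\ Rlt 0 (d4 a x0 y0 x1 y1)) ->
  exists c : R, Rlt 0 c /\ forall x0 y0 x1 y1, exists a, List.In a (a0::l) /\
    Rle (c * Rabs x0) (d4 a x0 y0 x1 y1) /\ Rle (c * Rabs y0) (d4 a x0 y0 x1 y1) /\
    Rle (c * Rabs x1) (d4 a x0 y0 x1 y1) /\ Rle (c * Rabs y1) (d4 a x0 y0 x1 y1).
Proof.
move=> H.
have [c c0 Hc] : exists2 c : R, 0 < c & forall v, c * `|v| <= fm a0 l v.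
  apply: mc_bound => v vn.
  have [a [ain Ha]] : exists a, List.In a (a0::l) /\ Rlt 0 (d4 a (v ord0 i0) (v ord0 i1) (v ord0 i2) (v ord0 i3)).
    apply: H => -[h0 [h1 [h2 h3]]]; move/eqP: vn; apply.
    apply/rowP => j; rewrite mxE; case: j => [[|[|[|[|m]]]] Hm] //=.
    - by rewrite -h0 /i0; congr (v ord0 _); apply: val_inj.
    - by rewrite -h1 /i1; congr (v ord0 _); apply: val_inj.
    - by rewrite -h2 /i2; congr (v ord0 _); apply: val_inj.
    - by rewrite -h3 /i3; congr (v ord0 _); apply: val_inj.
  apply: (lt_le_trans _ (fm_ge v ain)); rewrite dt_d4; exact/RltP.
exists c; split; first exact/RltP.
move=> x0 y0 x1 y1.
pose v : 'rV[R]_4 := \row_j [:: x0; y0; x1; y1]`_j.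
have [a [ain Ha]] := fm_ex a0 l v.
exists a; split => //.
have Hv := Hc v; rewrite Ha dt_d4 in Hv.
have Hn : forall i, c * `|v ord0 i| <= c * `|v| by move=> i; rewrite ler_pM2l // norm_coord.
move: (le_trans (Hn i0) Hv) (le_trans (Hn i1) Hv) (le_trans (Hn i2) Hv) (le_trans (Hn i3) Hv).
rewrite !mxE /= => /RleP h0 /RleP h1 /RleP h2 /RleP h3.
by split; [|split; [|split]].
Qed.
End MC.

Lemma LAker a b c d x0 y0 x1 y1 : indep4 a b c d ->
  d4 a x0 y0 x1 y1 = 0 -> d4 b x0 y0 x1 y1 = 0 -> d4 c x0 y0 x1 y1 = 0 -> d4 d x0 y0 x1 y1 = 0 ->
  x0 = 0 /\ y0 = 0 /\ x1 = 0 /\ y1 = 0.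
Proof. intros H h1 h2 h3 h4. exact (MC.LA_ker H h1 h2 h3 h4). Qed.

Lemma LAsolve a b c d : indep4 a b c d -> forall c1 c2 c3 c4 : R,
  exists x0 y0 x1 y1, d4 a x0 y0 x1 y1 = c1 /\ d4 b x0 y0 x1 y1 = c2 /\
     d4 c x0 y0 x1 y1 = c3 /\ d4 d x0 y0 x1 y1 = c4.
Proof. intros H. exact (MC.LA_solve H). Qed.

Lemma qbnd (a0 : R*R*R*R) (l : list (R*R*R*R)) :
  (forall x0 y0 x1 y1 : R, ~ (x0 = 0 /\ y0 = 0 /\ x1 = 0 /\ y1 = 0) ->
     exists a, In a (a0::l) /\ 0 < d4 a x0 y0 x1 y1) ->
  exists c : R, 0 < c /\ forall x0 y0 x1 y1, exists a, In a (a0::l) /\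
    c * Rabs x0 <= d4 a x0 y0 x1 y1 /\ c * Rabs y0 <= d4 a x0 y0 x1 y1 /\
    c * Rabs x1 <= d4 a x0 y0 x1 y1 /\ c * Rabs y1 <= d4 a x0 y0 x1 y1.
Proof. intros H. exact (MC.qbound H). Qed.

Definition dot (a b : vec3) := vx a * vx b + vy a * vy b + vz a * vz b.
Definition vsub (a b : vec3) := V3 (vx a - vx b) (vy a - vy b) (vz a - vz b).
Definition gq (g : cparams) : vec3 := let '(lam, al, de) := g in V3 0 0 lam.
Definition ge (g : cparams) : vec3 := let '(lam, al, de) := g in V3 (cos al) (sin al) de.
Definition del (g : cparams) : R := let '(lam, al, de) := g in de.
Definition Tg (p d : vec3) (g : cparams) : R := dot (vsub p (gq g)) (cross (ge g) d).

Lemma gline_eq g : gline g = OLine (gq g) (ge g).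
Proof. destruct g as [[l a] e]; reflexivity. Qed.

Lemma vec3_eq a b : a = b -> vx a = vx b /\ vy a = vy b /\ vz a = vz b.
Proof. intros ->; auto. Qed.

Lemma dot_pos n : n <> V3 0 0 0 -> 0 < dot n n.
Proof.
destruct n as [n1 n2 n3]; unfold dot; simpl; intros H.
destruct (Req_dec n1 0); [destruct (Req_dec n2 0); [destruct (Req_dec n3 0)|]|].
- subst; exfalso; apply H; reflexivity.
- nra.
- nra.
- nra.
Qed.

Lemma meets_T p d g : meets (OLine p d) (gline g) -> Tg p d g = 0.
Proof.
rewrite gline_eq. intros [t [u H]]. apply vec3_eq in H.
destruct p as [px py pz], d as [dx dy dz]; destruct g as [[l a] e]; simpl in *.
unfold Tg, dot, vsub, cross; simpl. destruct H as [h1 [h2 h3]].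
assert (px = u * cos a - t * dx) by lra.
assert (py = u * sin a - t * dy) by lra.
assert (pz = l + u * e - t * dz) by lra.
subst px py pz. ring.
Qed.

Lemma satisfies_T p d g : satisfies (OLine p d) g -> Tg p d g <= 0.
Proof.
intros [H|[Hnp [s [Hs H]]]].
- rewrite (meets_T _ _ _ H). lra.
- rewrite gline_eq in H, Hnp. destruct H as [t [u H]]. apply vec3_eq in H.
  unfold parallel in Hnp. simpl in Hnp, H.
  assert (Hn : 0 < dot (cross (ge g) d) (cross (ge g) d)) by (apply dot_pos; exact Hnp).
  destruct p as [px py pz], d as [dx dy dz]; destruct g as [[l a] e].
  unfold Tg, dot, vsub, cross in *; simpl in *. destruct H as [h1 [h2 h3]].
  assert (px = u * cos a - t * dx - s * (sin a * dz - e * dy)) by lra.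
  assert (py = u * sin a - t * dy - s * (e * dx - cos a * dz)) by lra.
  assert (pz = l + u * e - t * dz - s * (cos a * dy - sin a * dx)) by lra.
  subst px py pz.
  match goal with |- ?T <= 0 => assert (E : T = - s * ((sin a * dz - e * dy) * (sin a * dz - e * dy) +
     (e * dx - cos a * dz) * (e * dx - cos a * dz) + (cos a * dy - sin a * dx) * (cos a * dy - sin a * dx))) by ring end.
  rewrite E. nra.
Qed.

Lemma decomp (w e d : vec3) : cross e d <> V3 0 0 0 -> dot w (cross e d) = 0 ->
  exists al be, vx w = al * vx e + be * vx d /\ vy w = al * vy e + be * vy d /\ vz w = al * vz e + be * vz d.
Proof.
intros Hn Hw. pose proof (dot_pos _ Hn) as HN.
exists (dot (cross w d) (cross e d) / dot (cross e d) (cross e d)),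
  (dot (cross e w) (cross e d) / dot (cross e d) (cross e d)).
assert (Hne : dot (cross e d) (cross e d) <> 0) by lra.
assert (I1 : vx w * dot (cross e d) (cross e d) = dot (cross w d) (cross e d) * vx e + dot (cross e w) (cross e d) * vx d + dot w (cross e d) * vx (cross e d))
  by (destruct w, e, d; unfold dot, cross; simpl; ring).
assert (I2 : vy w * dot (cross e d) (cross e d) = dot (cross w d) (cross e d) * vy e + dot (cross e w) (cross e d) * vy d + dot w (cross e d) * vy (cross e d))
  by (destruct w, e, d; unfold dot, cross; simpl; ring).
assert (I3 : vz w * dot (cross e d) (cross e d) = dot (cross w d) (cross e d) * vz e + dot (cross e w) (cross e d) * vz d + dot w (cross e d) * vz (cross e d))
  by (destruct w, e, d; unfold dot, cross; simpl; ring).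
rewrite Hw in I1, I2, I3.
split; [|split]; apply (Rmult_eq_reg_r (dot (cross e d) (cross e d))); auto;
  [rewrite I1|rewrite I2|rewrite I3]; field; auto.
Qed.

Lemma T_satisfies p d g : cross (ge g) d <> V3 0 0 0 -> Tg p d g <= 0 -> satisfies (OLine p d) g.
Proof.
intros Hn HT. pose proof (dot_pos _ Hn) as HN. unfold satisfies.
destruct (Req_dec (Tg p d g) 0) as [H0|H0].
- left. rewrite gline_eq.
  destruct (decomp (vsub p (gq g)) (ge g) d Hn H0) as [al [be [h1 [h2 h3]]]].
  exists (- be), al. destruct p, d, g as [[l a] e]; unfold vadd, vscale, vsub in *; simpl in *.
  f_equal; lra.
- right. split; [unfold parallel; rewrite gline_eq; exact Hn|].
  set (s := - Tg p d g / dot (cross (ge g) d) (cross (ge g) d)).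
  assert (Hs : 0 < s) by (unfold s; apply Rdiv_lt_0_compat; lra).
  exists s. split; [exact Hs|]. rewrite gline_eq.
  assert (Hw : dot (vsub (vadd p (vscale s (cross (ge g) d))) (gq g)) (cross (ge g) d) = 0).
  { assert (E : dot (vsub (vadd p (vscale s (cross (ge g) d))) (gq g)) (cross (ge g) d) =
       Tg p d g + s * dot (cross (ge g) d) (cross (ge g) d)).
    { unfold Tg; destruct p, d, g as [[l a] e]; unfold dot, vsub, vadd, vscale, cross; simpl; ring. }
    rewrite E. unfold s. field. lra. }
  destruct (decomp _ (ge g) d Hn Hw) as [al [be [h1 [h2 h3]]]].
  exists (- be), al. simpl.
  destruct p, d, g as [[l a] e]; unfold vadd, vscale, vsub, cross in *; simpl in *.
  f_equal; lra.
Qed.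

Definition Lf (g : cparams) x0 y0 x1 y1 := d4 (normal g) x0 y0 x1 y1.
Definition Qf (x0 y0 x1 y1 : R) := y0 * x1 - x0 * y1.
Definition Ff g x0 y0 x1 y1 := Lf g x0 y0 x1 y1 + del g * Qf x0 y0 x1 y1.

Lemma T_line g x0 y0 x1 y1 :
  Tg (V3 x0 y0 0) (V3 (x1 - x0) (y1 - y0) 1) g = Ff g x0 y0 x1 y1.
Proof. destruct g as [[l a] e]; unfold Tg, Ff, Lf, Qf, d4, normal, dot, vsub, cross; simpl; ring. Qed.

Definition cx0 (p d : vec3) := vx p - vz p * vx d / vz d.
Definition cy0 (p d : vec3) := vy p - vz p * vy d / vz d.
Definition cx1 (p d : vec3) := cx0 p d + vx d / vz d.
Definition cy1 (p d : vec3) := cy0 p d + vy d / vz d.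

Lemma T_gen p d g : vz d <> 0 ->
  Tg p d g = vz d * Ff g (cx0 p d) (cy0 p d) (cx1 p d) (cy1 p d).
Proof.
intros Hz. destruct g as [[l a] e], p, d; unfold Tg, Ff, Lf, Qf, d4, normal, dot, vsub, cross, cx0, cy0, cx1, cy1; simpl in *.
unfold cx0, cy0; simpl. field; auto.
Qed.

Lemma nonpar g u v : del g ^ 2 * (u ^ 2 + v ^ 2) < 1 -> cross (ge g) (V3 u v 1) <> V3 0 0 0.
Proof.
destruct g as [[l a] e]; simpl; intros H E. injection E; intros h3 h2 h1.
pose proof (sin2_cos2 a) as S.
assert (sin a = e * v) by lra. assert (cos a = e * u) by lra.
unfold Rsqr in S. rewrite H0, H1 in S. nra.
Qed.

Definition pinsX (F : list cparams) : Prop :=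
  exists eps, 0 < eps /\ forall x0 y0 x1 y1,
    Rabs x0 < eps -> Rabs y0 < eps -> Rabs x1 < eps -> Rabs y1 < eps ->
    (forall g, In g F -> Ff g x0 y0 x1 y1 <= 0) -> x0 = 0 /\ y0 = 0 /\ x1 = 0 /\ y1 = 0.

Fixpoint Dsum (F : list cparams) : R :=
  match F with nil => 0 | g :: F' => Rabs (del g) + Dsum F' end.

Lemma Dsum_ge0 F : 0 <= Dsum F.
Proof. induction F; simpl; [lra|]. pose proof (Rabs_pos (del a)); lra. Qed.

Lemma Dsum_bound F g : In g F -> Rabs (del g) <= Dsum F.
Proof.
induction F as [|h F IH]; simpl; [tauto|]. intros [->|H].
- pose proof (Dsum_ge0 F); lra.
- pose proof (Rabs_pos (del h)); specialize (IH H); lra.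
Qed.

Lemma sq_small a u D : 0 <= D -> Rabs a <= D -> Rabs u < 1 / (2 * (1 + D)) -> a ^ 2 * u ^ 2 < 1 / 4.
Proof.
intros HD Ha Hu.
assert (H1 : Rabs (a * u) < 1 / 2).
{ rewrite Rabs_mult.
  assert (Rabs u * (2 * (1 + D)) < 1).
  { apply (Rmult_lt_compat_r (2 * (1 + D))) in Hu; [|lra].
    replace (1 / (2 * (1 + D)) * (2 * (1 + D))) with 1 in Hu by (field; lra). exact Hu. }
  pose proof (Rabs_pos u). pose proof (Rabs_pos a). nra. }
apply Rabs_def2 in H1. nra.
Qed.

Lemma pins_to_X F : pins F -> pinsX F.
Proof.
intros [eps [Heps Hp]].
pose proof (Dsum_ge0 F) as HD. set (D := Dsum F) in *.
set (e := Rmin (eps / 2) (1 / (4 * (1 + D)))).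
assert (He : 0 < e) by (unfold e; apply Rmin_pos; [lra|apply Rdiv_lt_0_compat; lra]).
assert (He1 : e <= eps / 2) by apply Rmin_l.
assert (He2 : e <= 1 / (4 * (1 + D))) by apply Rmin_r.
exists e; split; [exact He|].
intros x0 y0 x1 y1 h0 h1 h2 h3 Hall.
assert (Hu : Rabs (x1 - x0) < 2 * e).
{ unfold Rminus; eapply Rle_lt_trans; [apply Rabs_triang|]. rewrite Rabs_Ropp. lra. }
assert (Hv : Rabs (y1 - y0) < 2 * e).
{ unfold Rminus; eapply Rle_lt_trans; [apply Rabs_triang|]. rewrite Rabs_Ropp. lra. }
assert (E2 : 2 * e <= 1 / (2 * (1 + D))).
{ replace (1 / (2 * (1 + D))) with (2 * (1 / (4 * (1 + D)))) by (field; lra). lra. }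
assert (Hs : same_oline (OLine (V3 x0 y0 0) (V3 (x1 - x0) (y1 - y0) 1)) l0).
{ apply Hp; simpl; try lra; try (rewrite Rabs_R0; lra).
  - replace (1 - 1) with 0 by ring. rewrite Rabs_R0; lra.
  - intros g Hg. apply T_satisfies.
    + apply nonpar.
      pose proof (Dsum_bound F g Hg) as Hb. fold D in Hb.
      pose proof (sq_small (del g) (x1 - x0) D HD Hb ltac:(lra)).
      pose proof (sq_small (del g) (y1 - y0) D HD Hb ltac:(lra)). nra.
    + rewrite T_line. apply Hall. exact Hg. }
destruct Hs as [[c [Hc Ec]] [t Et]]. simpl in Ec, Et.
apply vec3_eq in Ec; apply vec3_eq in Et. unfold vscale, vadd in *; simpl in *.
destruct Ec as [c1 [c2 c3]]. destruct Et as [t1 [t2 t3]].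
assert (c = 1) by lra. subst c. assert (t = 0) by lra. subst t.
lra.
Qed.

Lemma div_small c z e : 0 < e -> Rabs c < e -> 1 / 2 < z -> Rabs (c / z) < 2 * e.
Proof.
intros He Hc Hz. apply Rabs_def2 in Hc. apply Rabs_def1.
- apply (Rmult_lt_reg_r z); [lra|]. replace (c / z * z) with c by (field; lra). nra.
- apply (Rmult_lt_reg_r z); [lra|]. replace (c / z * z) with c by (field; lra). nra.
Qed.

Lemma X_to_pins F : pinsX F -> pins F.
Proof.
intros [eps [Heps Hp]].
set (e := Rmin (1 / 2) (eps / 8)).
assert (He : 0 < e) by (unfold e; apply Rmin_pos; lra).
assert (He1 : e <= 1 / 2) by apply Rmin_l.
assert (He2 : e <= eps / 8) by apply Rmin_r.
exists e; split; [exact He|].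
intros p d hp1 hp2 hp3 hd1 hd2 hd3 Hall.
assert (Hz : 1 / 2 < vz d) by (apply Rabs_def2 in hd3; lra).
assert (Hz0 : vz d <> 0) by lra.
assert (Hdx : Rabs (vx d / vz d) < 2 * e) by (apply div_small; auto).
assert (Hdy : Rabs (vy d / vz d) < 2 * e) by (apply div_small; auto).
assert (Hx0 : Rabs (cx0 p d) < 2 * e).
{ unfold cx0. replace (vz p * vx d / vz d) with (vz p * (vx d / vz d)) by (field; auto).
  apply Rabs_def2 in hp1; apply Rabs_def2 in hp3; apply Rabs_def2 in Hdx. apply Rabs_def1; nra. }
assert (Hy0 : Rabs (cy0 p d) < 2 * e).
{ unfold cy0. replace (vz p * vy d / vz d) with (vz p * (vy d / vz d)) by (field; auto).
  apply Rabs_def2 in hp2; apply Rabs_def2 in hp3; apply Rabs_def2 in Hdy. apply Rabs_def1; nra. }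
assert (Hx1 : Rabs (cx1 p d) < 4 * e).
{ unfold cx1. apply Rabs_def2 in Hx0; apply Rabs_def2 in Hdx. apply Rabs_def1; lra. }
assert (Hy1 : Rabs (cy1 p d) < 4 * e).
{ unfold cy1. apply Rabs_def2 in Hy0; apply Rabs_def2 in Hdy. apply Rabs_def1; lra. }
destruct (Hp (cx0 p d) (cy0 p d) (cx1 p d) (cy1 p d)) as [E0 [E1 [E2 E3]]]; try lra.
{ intros g Hg. pose proof (satisfies_T p d g (Hall g Hg)) as HT.
  rewrite T_gen in HT by auto. nra. }
unfold cx1, cy1 in E2, E3. rewrite E0 in E2. rewrite E1 in E3.
assert (Edx : vx d = 0).
{ assert (vx d / vz d = 0) by lra. apply (Rmult_eq_reg_r (/ vz d)); [|apply Rinv_neq_0_compat; auto].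
  unfold Rdiv in H. lra. }
assert (Edy : vy d = 0).
{ assert (vy d / vz d = 0) by lra. apply (Rmult_eq_reg_r (/ vz d)); [|apply Rinv_neq_0_compat; auto].
  unfold Rdiv in H. lra. }
unfold cx0, cy0 in E0, E1. rewrite Edx in E0. rewrite Edy in E1.
split.
- exists (1 / vz d). split; [apply Rdiv_lt_0_compat; lra|].
  destruct d as [dx dy dz]; simpl in *; subst; unfold vscale; simpl; f_equal; field; auto.
- exists (- vz p / vz d).
  destruct p as [px py pz], d as [dx dy dz]; simpl in *; subst; unfold vadd, vscale; simpl.
  f_equal; try field; auto; unfold Rdiv in E0, E1; lra.
Qed.

Lemma pins_iff F : pins F <-> pinsX F.
Proof. split; [apply pins_to_X|apply X_to_pins]. Qed.

Lemma Ff_orth g x0 y0 x1 y1 : Ff (orth g) x0 y0 x1 y1 = Lf g x0 y0 x1 y1.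
Proof. destruct g as [[l a] e]; unfold Ff, Lf, Qf, d4, orth, normal, del; simpl; ring. Qed.

Lemma Lf_scale g k x0 y0 x1 y1 : Lf g (k * x0) (k * y0) (k * x1) (k * y1) = k * Lf g x0 y0 x1 y1.
Proof. destruct g as [[l a] e]; unfold Lf, d4, normal; simpl; ring. Qed.

Lemma in_orth F g : In g F -> In (orth g) (map orth F).
Proof. intros; apply in_map; auto. Qed.

Lemma abs0 x : Rabs x = 0 -> x = 0.
Proof. intros H; destruct (Req_dec x 0); auto; exfalso; apply (Rabs_no_R0 x); auto. Qed.

Lemma abs_sum_pos x0 y0 x1 y1 : ~ (x0 = 0 /\ y0 = 0 /\ x1 = 0 /\ y1 = 0) ->
  0 < Rabs x0 + Rabs y0 + Rabs x1 + Rabs y1.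
Proof.
intros H. pose proof (Rabs_pos x0); pose proof (Rabs_pos y0); pose proof (Rabs_pos x1); pose proof (Rabs_pos y1).
destruct (Req_dec (Rabs x0 + Rabs y0 + Rabs x1 + Rabs y1) 0) as [E|E]; [|lra].
exfalso; apply H.
assert (Rabs x0 = 0) by lra. assert (Rabs y0 = 0) by lra. assert (Rabs x1 = 0) by lra. assert (Rabs y1 = 0) by lra.
repeat split; apply abs0; auto.
Qed.

Lemma scale_small x k M eps : 0 < k -> Rabs x <= M -> k * M < eps -> Rabs (k * x) < eps.
Proof. intros Hk Hx HM. rewrite Rabs_mult, Rabs_pos_eq by lra. nra. Qed.

Lemma orth_pos F : pinsX (map orth F) ->
  forall x0 y0 x1 y1, ~ (x0 = 0 /\ y0 = 0 /\ x1 = 0 /\ y1 = 0) ->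
  exists g, In g F /\ 0 < Lf g x0 y0 x1 y1.
Proof.
intros [eps [Heps Hp]] x0 y0 x1 y1 Hn.
apply NNPP; intros Hc.
pose proof (abs_sum_pos _ _ _ _ Hn) as HM.
set (M := Rabs x0 + Rabs y0 + Rabs x1 + Rabs y1) in *.
set (k := eps / (2 * M)).
assert (Hk : 0 < k) by (unfold k; apply Rdiv_lt_0_compat; lra).
assert (HkM : k * M < eps) by (unfold k; field_simplify; lra).
pose proof (Rabs_pos x0); pose proof (Rabs_pos y0); pose proof (Rabs_pos x1); pose proof (Rabs_pos y1).
destruct (Hp (k * x0) (k * y0) (k * x1) (k * y1)) as [e0 [e1 [e2 e3]]];
  try (apply (scale_small _ _ M); auto; unfold M; lra).
- intros g Hg. apply in_map_iff in Hg. destruct Hg as [g0 [<- Hg0]].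
  rewrite Ff_orth, Lf_scale.
  destruct (Rle_dec (Lf g0 x0 y0 x1 y1) 0) as [Hle|Hgt]; [nra|].
  exfalso; apply Hc; exists g0; split; auto; lra.
- apply Hn. repeat split; [apply (Rmult_eq_reg_l k) | apply (Rmult_eq_reg_l k) | apply (Rmult_eq_reg_l k) | apply (Rmult_eq_reg_l k)]; lra.
Qed.

Lemma Q_bound x0 y0 x1 y1 eps : Rabs x0 < eps -> Rabs y0 < eps ->
  Rabs (Qf x0 y0 x1 y1) <= eps * (Rabs x1 + Rabs y1).
Proof.
intros h0 h1. unfold Qf. unfold Rminus. eapply Rle_trans; [apply Rabs_triang|].
rewrite Rabs_Ropp, !Rabs_mult.
pose proof (Rabs_pos x1); pose proof (Rabs_pos y1). nra.
Qed.

Lemma part1 F : pinsX (map orth F) -> pinsX F.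
Proof.
intros Hp.
pose proof (orth_pos F Hp) as Hpos.
destruct F as [|g0 F'].
{ destruct (Hpos 1 0 0 0) as [g [[] _]]. intros [H _]; lra. }
destruct (qbnd (normal g0) (map normal F')) as [c [Hc Hb]].
{ intros x0 y0 x1 y1 Hn. destruct (Hpos _ _ _ _ Hn) as [g [Hg Hl]].
  exists (normal g); split; [|exact Hl].
  change (normal g0 :: map normal F') with (map normal (g0 :: F')). apply in_map; auto. }
pose proof (Dsum_ge0 (g0 :: F')) as HD. set (D := Dsum (g0 :: F')) in *.
set (eps := c / (4 * (D + 1))).
assert (He : 0 < eps) by (unfold eps; apply Rdiv_lt_0_compat; lra).
assert (HDe : D * eps <= c / 4).
{ unfold eps. apply (Rmult_le_reg_r (4 * (D + 1))); [lra|].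
  replace (D * (c / (4 * (D + 1))) * (4 * (D + 1))) with (D * c) by (field; lra).
  replace (c / 4 * (4 * (D + 1))) with (c * D + c) by (field; lra). nra. }
exists eps; split; [exact He|].
intros x0 y0 x1 y1 h0 h1 h2 h3 Hall.
destruct (Hb x0 y0 x1 y1) as [a [Ha [b0 [b1 [b2 b3]]]]].
change (normal g0 :: map normal F') with (map normal (g0 :: F')) in Ha. apply in_map_iff in Ha. destruct Ha as [g [<- Hg]].
pose proof (Hall g Hg) as HF. unfold Ff in HF. fold (Lf g x0 y0 x1 y1) in *.
pose proof (Dsum_bound _ g Hg) as Hdel. fold D in Hdel.
pose proof (Q_bound x0 y0 x1 y1 eps h0 h1) as HQ.
assert (HdQ : - (del g * Qf x0 y0 x1 y1) <= D * (eps * (Rabs x1 + Rabs y1))).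
{ eapply Rle_trans; [apply Rle_abs|]. rewrite Rabs_Ropp, Rabs_mult.
  apply Rmult_le_compat; auto using Rabs_pos. }
pose proof (Rabs_pos x0); pose proof (Rabs_pos y0); pose proof (Rabs_pos x1); pose proof (Rabs_pos y1).
assert (HS : Rabs x1 + Rabs y1 = 0).
{ assert (c * (Rabs x1 + Rabs y1) <= 2 * (D * eps) * (Rabs x1 + Rabs y1)) by nra.
  nra. }
assert (Ex1 : x1 = 0) by (apply abs0; lra).
assert (Ey1 : y1 = 0) by (apply abs0; lra).
assert (EQ : Qf x0 y0 x1 y1 = 0) by (unfold Qf; subst; ring).
rewrite EQ in HF.
assert (Ex0 : x0 = 0) by (apply abs0; nra).
assert (Ey0 : y0 = 0) by (apply abs0; nra).
auto.
Qed.

Definition key (g : cparams) : R * R * R * R := let '(l, a, e) := g in (l, cos a, sin a, e).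

Lemma key_same g1 g2 : same_oline (gline g1) (gline g2) -> key g1 = key g2.
Proof.
destruct g1 as [[l1 a1] e1], g2 as [[l2 a2] e2]; simpl.
intros [[c [Hc Ec]] [t Et]]. apply vec3_eq in Ec; apply vec3_eq in Et.
unfold vscale, vadd in *; simpl in *.
destruct Ec as [c1 [c2 c3]], Et as [t1 [t2 t3]].
pose proof (sin2_cos2 a1) as S1. pose proof (sin2_cos2 a2) as S2. unfold Rsqr in S1, S2.
assert (c * c = 1) by (rewrite c1, c2 in S2; nra).
assert (c = 1) by nra. subst c.
assert (t * t = 0) by nra. assert (t = 0) by nra. subst t.
f_equal; [f_equal; [f_equal|]|]; lra.
Qed.

Lemma key_Lf g g' x0 y0 x1 y1 : key g = key g' -> Lf g x0 y0 x1 y1 = Lf g' x0 y0 x1 y1.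
Proof.
destruct g as [[l a] e], g' as [[l' a'] e']; simpl; intros E; injection E; intros.
unfold Lf, d4, normal. rewrite H0, H1, H2. reflexivity.
Qed.

Lemma key_del g g' : key g = key g' -> del g = del g'.
Proof. destruct g as [[l a] e], g' as [[l' a'] e']; simpl; intros E; injection E; intros; auto. Qed.

Definition dist4 (a b c d : cparams) : Prop :=
  key a <> key b /\ key a <> key c /\ key a <> key d /\ key b <> key c /\ key b <> key d /\ key c <> key d.

Lemma greedy (P : cparams -> Prop) :
  (exists a1 a2 a3 a4, P a1 /\ P a2 /\ P a3 /\ P a4 /\ dist4 a1 a2 a3 a4) \/
  (forall t, ~ P t) \/
  (exists a1 a2 a3, P a1 /\ P a2 /\ P a3 /\
     forall t, P t -> key t = key a1 \/ key t = key a2 \/ key t = key a3).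
Proof.
destruct (classic (exists t, P t)) as [[a1 H1]|H]; [|right; left; intros t Ht; apply H; eauto].
destruct (classic (exists t, P t /\ key t <> key a1)) as [[a2 [H2 N2]]|Hn1].
2:{ right; right. exists a1, a1, a1. repeat split; auto. intros t Ht.
    left. apply NNPP; intros C; apply Hn1; eauto. }
destruct (classic (exists t, P t /\ key t <> key a1 /\ key t <> key a2)) as [[a3 [H3 [N31 N32]]]|Hn2].
2:{ right; right. exists a1, a2, a2. repeat split; auto. intros t Ht.
    destruct (classic (key t = key a1)); auto. right; left.
    apply NNPP; intros C; apply Hn2; eauto. }
destruct (classic (exists t, P t /\ key t <> key a1 /\ key t <> key a2 /\ key t <> key a3)) as [[a4 [H4 [N41 [N42 N43]]]]|Hn3].
2:{ right; right. exists a1, a2, a3. repeat split; auto. intros t Ht.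
    destruct (classic (key t = key a1)); auto. destruct (classic (key t = key a2)); auto.
    right; right. apply NNPP; intros C; apply Hn3; eauto 10. }
left. exists a1, a2, a3, a4. unfold dist4. repeat split; auto.
Qed.

Lemma ext4 (Pm : cparams -> Prop) (g1 g2 g3 g4 a1 a2 a3 : cparams) :
  Pm g1 -> Pm g2 -> Pm g3 -> Pm g4 -> Pm a1 -> Pm a2 -> Pm a3 -> dist4 g1 g2 g3 g4 ->
  exists h1 h2 h3 h4, Pm h1 /\ Pm h2 /\ Pm h3 /\ Pm h4 /\ dist4 h1 h2 h3 h4 /\
    (forall t, key t = key a1 \/ key t = key a2 \/ key t = key a3 ->
       key t = key h1 \/ key t = key h2 \/ key t = key h3 \/ key t = key h4).
Proof.
intros P1 P2 P3 P4 Q1 Q2 Q3 D.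
assert (S1 : exists h1 h2 h3 h4, Pm h1 /\ Pm h2 /\ Pm h3 /\ Pm h4 /\ dist4 h1 h2 h3 h4 /\ h1 = a1).
{ unfold dist4 in *; decompose [and] D.
  destruct (classic (key a1 = key g1)).
  { exists a1, g2, g3, g4; repeat split; auto; try congruence; intro; congruence. }
  destruct (classic (key a1 = key g2)).
  { exists a1, g1, g3, g4; repeat split; auto; try congruence; intro; congruence. }
  destruct (classic (key a1 = key g3)).
  { exists a1, g1, g2, g4; repeat split; auto; try congruence; intro; congruence. }
  exists a1, g1, g2, g3; repeat split; auto; try congruence; intro; congruence. }
destruct S1 as [h1 [h2 [h3 [h4 [R1 [R2 [R3 [R4 [D1 E1]]]]]]]]]. subst h1.
assert (S2 : exists k2 k3 k4, Pm k2 /\ Pm k3 /\ Pm k4 /\ dist4 a1 k2 k3 k4 /\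
   (key a2 = key a1 \/ key a2 = key k2)).
{ unfold dist4 in *; decompose [and] D1.
  destruct (classic (key a2 = key a1)).
  { exists h2, h3, h4; repeat split; auto; try tauto; intro; congruence. }
  destruct (classic (key a2 = key h2)).
  { exists h2, h3, h4; repeat split; auto; try tauto; intro; congruence. }
  destruct (classic (key a2 = key h3)).
  { exists a2, h2, h4; repeat split; auto; try congruence; intro; congruence. }
  exists a2, h2, h3; repeat split; auto; try congruence; intro; congruence. }
destruct S2 as [k2 [k3 [k4 [R2' [R3' [R4' [D2 E2]]]]]]].
assert (S3 : exists m3 m4, Pm m3 /\ Pm m4 /\ dist4 a1 k2 m3 m4 /\
   (key a3 = key a1 \/ key a3 = key k2 \/ key a3 = key m3) /\
   (key a2 = key a1 \/ key a2 = key k2)).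
{ unfold dist4 in *; decompose [and] D2.
  destruct (classic (key a3 = key a1 \/ key a3 = key k2 \/ key a3 = key k3)).
  { exists k3, k4; repeat split; auto; try tauto; intro; congruence. }
  destruct (classic (key a3 = key k4)).
  { exists a3, k3; repeat split; auto; try congruence; try tauto; intro; congruence. }
  exists a3, k4; repeat split; auto; try congruence; try tauto; intro; congruence. }
destruct S3 as [m3 [m4 [R3'' [R4'' [D3 [E3 E2']]]]]].
exists a1, k2, m3, m4. split; [auto|split; [auto|split; [auto|split; [auto|split; [exact D3|]]]]].
intros t [Ht|[Ht|Ht]]; rewrite Ht; tauto.
Qed.

Lemma twoD A2 B2 A3 B3 : exists s t, ~ (s = 0 /\ t = 0) /\ A2 * s + B2 * t <= 0 /\ A3 * s + B3 * t <= 0.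
Proof.
destruct (classic (A2 = 0 /\ B2 = 0)) as [[-> ->]|H].
- destruct (classic (A3 = 0 /\ B3 = 0)) as [[-> ->]|H3].
  + exists 1, 0. split; [intros [h _]; lra|]. lra.
  + exists (- A3), (- B3). split; [intros [h1 h2]; apply H3; lra|]. split; nra.
- destruct (Rle_dec (A3 * B2 - B3 * A2) 0).
  + exists B2, (- A2). split; [intros [h1 h2]; apply H; lra|]. split; nra.
  + exists (- B2), A2. split; [intros [h1 h2]; apply H; lra|]. split; nra.
Qed.

Lemma qzero a1 a2 a3 : exists x0 y0 x1 y1, ~ (x0 = 0 /\ y0 = 0 /\ x1 = 0 /\ y1 = 0) /\
  Qf x0 y0 x1 y1 = 0 /\ Lf a1 x0 y0 x1 y1 <= 0 /\ Lf a2 x0 y0 x1 y1 <= 0 /\ Lf a3 x0 y0 x1 y1 <= 0.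
Proof.
destruct a1 as [[l1 al1] e1], a2 as [[l2 al2] e2], a3 as [[l3 al3] e3].
set (c := cos al1). set (s1 := sin al1).
set (sg2 := c * sin al2 - s1 * cos al2). set (sg3 := c * sin al3 - s1 * cos al3).
destruct (twoD (sg2 * (1 - l2)) (sg2 * l2) (sg3 * (1 - l3)) (sg3 * l3)) as [s [t [Hst [H2 H3]]]].
exists (s * c), (s * s1), (t * c), (t * s1).
pose proof (sin2_cos2 al1) as S. unfold Rsqr in S. fold c s1 in S.
split; [|split; [|split; [|split]]].
- intros [h1 [h2 [h3 h4]]]. apply Hst. split; nra.
- unfold Qf; ring.
- unfold Lf, d4, normal. fold c s1. replace ((1 - l1) * s1 * (s * c) + - (1 - l1) * c * (s * s1) + l1 * s1 * (t * c) + - l1 * c * (t * s1)) with 0 by ring. lra.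
- unfold Lf, d4, normal. fold c s1. unfold sg2 in H2. nra.
- unfold Lf, d4, normal. fold c s1. unfold sg3 in H3. nra.
Qed.

Lemma notpins_dir F x0 y0 x1 y1 : ~ (x0 = 0 /\ y0 = 0 /\ x1 = 0 /\ y1 = 0) ->
  Qf x0 y0 x1 y1 = 0 -> (forall g, In g F -> Lf g x0 y0 x1 y1 <= 0) -> ~ pinsX F.
Proof.
intros Hn HQ HL [eps [Heps Hp]].
pose proof (abs_sum_pos _ _ _ _ Hn) as HM.
set (M := Rabs x0 + Rabs y0 + Rabs x1 + Rabs y1) in *.
set (k := eps / (2 * M)).
assert (Hk : 0 < k) by (unfold k; apply Rdiv_lt_0_compat; lra).
assert (HkM : k * M < eps) by (unfold k; field_simplify; lra).
pose proof (Rabs_pos x0); pose proof (Rabs_pos y0); pose proof (Rabs_pos x1); pose proof (Rabs_pos y1).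
destruct (Hp (k * x0) (k * y0) (k * x1) (k * y1)) as [e0 [e1 [e2 e3]]];
  try (apply (scale_small _ _ M); auto; unfold M; lra).
- intros g Hg. unfold Ff. fold (Lf g (k * x0) (k * y0) (k * x1) (k * y1)). rewrite Lf_scale.
  replace (Qf (k * x0) (k * y0) (k * x1) (k * y1)) with (k * k * Qf x0 y0 x1 y1) by (unfold Qf; ring).
  rewrite HQ. specialize (HL g Hg). nra.
- apply Hn. repeat split; [apply (Rmult_eq_reg_l k) | apply (Rmult_eq_reg_l k) | apply (Rmult_eq_reg_l k) | apply (Rmult_eq_reg_l k)]; lra.
Qed.

Lemma poly_small L P1 P2 P3 : L <= 0 -> (L = 0 -> P1 = -1) ->
  exists tau, 0 < tau /\ forall t, 0 < t <= tau -> t*L + t^2*P1 + t^3*P2 + t^4*P3 <= 0.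
Proof.
intros HL H0.
pose proof (Rle_abs P1) as a1; pose proof (Rle_abs P2) as a2; pose proof (Rle_abs P3) as a3.
pose proof (Rabs_pos P1) as b1; pose proof (Rabs_pos P2) as b2; pose proof (Rabs_pos P3) as b3.
assert (c2 : - Rabs P2 <= P2) by (pose proof (Rle_abs (-P2)); rewrite Rabs_Ropp in *; lra).
assert (c3 : - Rabs P3 <= P3) by (pose proof (Rle_abs (-P3)); rewrite Rabs_Ropp in *; lra).
assert (c1 : - Rabs P1 <= P1) by (pose proof (Rle_abs (-P1)); rewrite Rabs_Ropp in *; lra).
destruct (Req_dec L 0) as [E|E].
- specialize (H0 E). subst L P1.
  set (K := Rabs P2 + Rabs P3).
  exists (Rmin 1 (1 / (2 * (K + 1)))). split.
  { apply Rmin_pos; [lra|apply Rdiv_lt_0_compat; unfold K; lra]. }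
  intros t [Ht1 Ht2].
  assert (t1 : t <= 1) by (eapply Rle_trans; [exact Ht2|apply Rmin_l]).
  assert (t2 : t * (2 * (K + 1)) <= 1).
  { assert (t <= 1 / (2 * (K + 1))) by (eapply Rle_trans; [exact Ht2|apply Rmin_r]).
    apply (Rmult_le_compat_r (2 * (K + 1))) in H; [|unfold K; lra].
    replace (1 / (2 * (K + 1)) * (2 * (K + 1))) with 1 in H by (field; unfold K; lra). exact H. }
  assert (t * P2 + t ^ 2 * P3 <= 1 / 2).
  { assert (t * P2 <= t * Rabs P2) by nra.
    assert (t ^ 2 * P3 <= t * Rabs P3).
    { replace (t ^ 2) with (t * t) by ring.
      assert (t * t * P3 <= t * t * Rabs P3) by (apply Rmult_le_compat_l; nra).
      assert (t * t * Rabs P3 <= t * Rabs P3) by (apply Rmult_le_compat_r; nra). lra. }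
    unfold K in t2. nra. }
  replace (t * 0 + t ^ 2 * -1 + t ^ 3 * P2 + t ^ 4 * P3) with (t ^ 2 * (-1 + (t * P2 + t ^ 2 * P3))) by ring.
  assert (0 < t ^ 2) by (simpl; nra). nra.
- assert (HL' : L < 0) by lra.
  set (K := Rabs P1 + Rabs P2 + Rabs P3).
  exists (Rmin 1 (- L / (K + 1))). split.
  { apply Rmin_pos; [lra|apply Rdiv_lt_0_compat; unfold K; lra]. }
  intros t [Ht1 Ht2].
  assert (t1 : t <= 1) by (eapply Rle_trans; [exact Ht2|apply Rmin_l]).
  assert (t2 : t * (K + 1) <= - L).
  { assert (t <= - L / (K + 1)) by (eapply Rle_trans; [exact Ht2|apply Rmin_r]).
    apply (Rmult_le_compat_r (K + 1)) in H; [|unfold K; lra].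
    replace (- L / (K + 1) * (K + 1)) with (- L) in H by (field; unfold K; lra). exact H. }
  assert (W : P1 + t * P2 + t ^ 2 * P3 <= K).
  { assert (t * P2 <= Rabs P2) by nra.
    assert (t ^ 2 * P3 <= Rabs P3).
    { replace (t ^ 2) with (t * t) by ring.
      assert (t * t * P3 <= t * t * Rabs P3) by (apply Rmult_le_compat_l; nra).
      assert (t * t * Rabs P3 <= Rabs P3) by (assert (t * t <= 1) by nra; nra). lra. }
    unfold K; lra. }
  replace (t * L + t ^ 2 * P1 + t ^ 3 * P2 + t ^ 4 * P3) with (t * (L + t * (P1 + t * P2 + t ^ 2 * P3))) by ring.
  assert (L + t * (P1 + t * P2 + t ^ 2 * P3) <= 0).
  { assert (t * (P1 + t * P2 + t ^ 2 * P3) <= t * K) by nra. unfold K in *; nra. }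
  nra.
Qed.

Lemma uniform (Pr : cparams -> R -> Prop) (F : list cparams) :
  (forall g, In g F -> exists tau, 0 < tau /\ forall t, 0 < t <= tau -> Pr g t) ->
  exists tau, 0 < tau /\ forall g, In g F -> forall t, 0 < t <= tau -> Pr g t.
Proof.
induction F as [|g F IH]; intros H.
- exists 1; split; [lra|]. intros g [].
- destruct (H g (or_introl eq_refl)) as [t1 [Ht1 H1]].
  destruct IH as [t2 [Ht2 H2]]. { intros g' Hg'; apply H; right; auto. }
  exists (Rmin t1 t2); split; [apply Rmin_pos; auto|].
  intros g' [<-|Hg'] t [h1 h2].
  + apply H1; split; auto. eapply Rle_trans; [exact h2|apply Rmin_l].
  + apply H2; auto; split; auto. eapply Rle_trans; [exact h2|apply Rmin_r].
Qed.

Lemma Ff_curve g t x0 y0 x1 y1 z0 w0 z1 w1 :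
  Ff g (t * x0 + t^2 * z0) (t * y0 + t^2 * w0) (t * x1 + t^2 * z1) (t * y1 + t^2 * w1) =
  t * Lf g x0 y0 x1 y1 + t^2 * (Lf g z0 w0 z1 w1 + del g * Qf x0 y0 x1 y1) +
  t^3 * (del g * (y0 * z1 + w0 * x1 - x0 * w1 - z0 * y1)) + t^4 * (del g * Qf z0 w0 z1 w1).
Proof. destruct g as [[l a] e]; unfold Ff, Lf, Qf, d4, normal, del; simpl; ring. Qed.

Lemma coord_small x z t M N eps : 0 < t <= 1 -> Rabs x <= M -> Rabs z <= N -> t * (M + N) < eps ->
  Rabs (t * x + t ^ 2 * z) < eps.
Proof.
intros [h1 h2] hx hz he. eapply Rle_lt_trans; [apply Rabs_triang|].
rewrite !Rabs_mult. rewrite (Rabs_pos_eq t) by lra. rewrite (Rabs_pos_eq (t ^ 2)) by (simpl; nra).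
pose proof (Rabs_pos z). assert (t ^ 2 <= t) by (simpl; nra). nra.
Qed.

Lemma curve F x0 y0 x1 y1 z0 w0 z1 w1 : ~ (x0 = 0 /\ y0 = 0 /\ x1 = 0 /\ y1 = 0) ->
  (forall g, In g F -> Lf g x0 y0 x1 y1 <= 0 /\
     (Lf g x0 y0 x1 y1 = 0 -> Lf g z0 w0 z1 w1 + del g * Qf x0 y0 x1 y1 = -1)) -> ~ pinsX F.
Proof.
intros Hn HF [eps [Heps Hp]].
destruct (uniform (fun g t => Ff g (t * x0 + t^2 * z0) (t * y0 + t^2 * w0) (t * x1 + t^2 * z1) (t * y1 + t^2 * w1) <= 0) F)
  as [tau [Htau Hu]].
{ intros g Hg. destruct (HF g Hg) as [h1 h2].
  destruct (poly_small _ _ (del g * (y0 * z1 + w0 * x1 - x0 * w1 - z0 * y1)) (del g * Qf z0 w0 z1 w1) h1 h2) as [tau [Ht H]].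
  exists tau; split; auto. intros t Ht'. rewrite Ff_curve. apply H; auto. }
pose proof (abs_sum_pos _ _ _ _ Hn) as HM.
set (M := Rabs x0 + Rabs y0 + Rabs x1 + Rabs y1) in *.
set (N := Rabs z0 + Rabs w0 + Rabs z1 + Rabs w1).
pose proof (Rabs_pos x0); pose proof (Rabs_pos y0); pose proof (Rabs_pos x1); pose proof (Rabs_pos y1).
pose proof (Rabs_pos z0); pose proof (Rabs_pos w0); pose proof (Rabs_pos z1); pose proof (Rabs_pos w1).
assert (HN : 0 <= N) by (unfold N; lra).
set (t := Rmin tau (Rmin 1 (Rmin (eps / (2 * (M + N + 1))) (M / (2 * (N + 1)))))).
assert (Ht0 : 0 < t).
{ unfold t; repeat apply Rmin_pos; auto; try lra; apply Rdiv_lt_0_compat; lra. }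
assert (Ht1 : t <= tau) by apply Rmin_l.
assert (Ht2 : t <= 1) by (eapply Rle_trans; [apply Rmin_r|apply Rmin_l]).
assert (Ht3 : t <= eps / (2 * (M + N + 1))) by (eapply Rle_trans; [apply Rmin_r|]; eapply Rle_trans; [apply Rmin_r|apply Rmin_l]).
assert (Ht4 : t <= M / (2 * (N + 1))) by (eapply Rle_trans; [apply Rmin_r|]; eapply Rle_trans; [apply Rmin_r|apply Rmin_r]).
assert (Hte : t * (M + N) < eps).
{ apply (Rmult_le_compat_r (2 * (M + N + 1))) in Ht3; [|lra].
  replace (eps / (2 * (M + N + 1)) * (2 * (M + N + 1))) with eps in Ht3 by (field; lra). nra. }
assert (HtN : t * N < M).
{ apply (Rmult_le_compat_r (2 * (N + 1))) in Ht4; [|lra].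
  replace (M / (2 * (N + 1)) * (2 * (N + 1))) with M in Ht4 by (field; lra). nra. }
destruct (Hp (t * x0 + t^2 * z0) (t * y0 + t^2 * w0) (t * x1 + t^2 * z1) (t * y1 + t^2 * w1)) as [e0 [e1 [e2 e3]]].
- apply (coord_small _ _ _ M N); auto; unfold M, N in *; lra.
- apply (coord_small _ _ _ M N); auto; unfold M, N in *; lra.
- apply (coord_small _ _ _ M N); auto; unfold M, N in *; lra.
- apply (coord_small _ _ _ M N); auto; unfold M, N in *; lra.
- intros g Hg. apply Hu; auto.
- assert (K : forall x z, t * x + t ^ 2 * z = 0 -> Rabs x = t * Rabs z).
  { intros x z Hxz. assert (x = - (t * z)) by (simpl in Hxz; apply (Rmult_eq_reg_l t); [nra|lra]).
    subst x. rewrite Rabs_Ropp, Rabs_mult, Rabs_pos_eq; lra. }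
  apply K in e0; apply K in e1; apply K in e2; apply K in e3.
  unfold M, N in *. lra.
Qed.

Lemma indep_of F h1 h2 h3 h4 : no_four_dependent F -> In h1 F -> In h2 F -> In h3 F -> In h4 F ->
  dist4 h1 h2 h3 h4 -> indep4 (normal h1) (normal h2) (normal h3) (normal h4).
Proof.
intros Hnf i1 i2 i3 i4 (d12 & d13 & d14 & d23 & d24 & d34).
apply Hnf; auto; intro S; apply key_same in S; auto.
Qed.

Lemma part2 F : pinsX F -> no_four_dependent F -> pinsX (map orth F).
Proof.
intros Hp Hnf. apply NNPP; intros Hno.
assert (HX : exists x0 y0 x1 y1, ~ (x0 = 0 /\ y0 = 0 /\ x1 = 0 /\ y1 = 0) /\
          forall g, In g F -> Lf g x0 y0 x1 y1 <= 0).
{ apply NNPP; intros C; apply Hno. exists 1; split; [lra|].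
  intros x0 y0 x1 y1 _ _ _ _ Hall. apply NNPP; intros Hn; apply C.
  exists x0, y0, x1, y1; split; auto. intros g Hg. rewrite <- Ff_orth. apply Hall, in_orth, Hg. }
destruct HX as [x0 [y0 [x1 [y1 [Hn HL]]]]].
destruct (greedy (fun t => In t F)) as [[g1 [g2 [g3 [g4 [G1 [G2 [G3 [G4 DG]]]]]]]]|[Hemp|[r1 [r2 [r3 [R1 [R2 [R3 Rc]]]]]]]].
2:{ destruct (qzero (0,0,0) (0,0,0) (0,0,0)) as [z0 [w0 [z1 [w1 [Zn [ZQ _]]]]]].
    apply (notpins_dir F z0 w0 z1 w1 Zn ZQ); auto. intros g Hg; exfalso; apply (Hemp g Hg). }
2:{ destruct (qzero r1 r2 r3) as [z0 [w0 [z1 [w1 [Zn [ZQ [Z1 [Z2 Z3]]]]]]]].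
    apply (notpins_dir F z0 w0 z1 w1 Zn ZQ); auto. intros g Hg.
    destruct (Rc g Hg) as [E|[E|E]]; rewrite (key_Lf g _ _ _ _ _ E); auto. }
assert (HY : exists z0 w0 z1 w1, forall g, In g F -> Lf g x0 y0 x1 y1 = 0 ->
           Lf g z0 w0 z1 w1 + del g * Qf x0 y0 x1 y1 = -1).
{ destruct (greedy (fun t => In t F /\ Lf t x0 y0 x1 y1 = 0)) as
    [[a1 [a2 [a3 [a4 [[A1 L1] [[A2 L2] [[A3 L3] [[A4 L4] DA]]]]]]]]|[Hemp|[a1 [a2 [a3 [[A1 L1] [[A2 L2] [[A3 L3] Ac]]]]]]]].
  - exfalso. apply Hn.
    apply (LAker _ _ _ _ _ _ _ _ (indep_of F a1 a2 a3 a4 Hnf A1 A2 A3 A4 DA)); auto.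
  - exists 0, 0, 0, 0. intros g Hg HL0. exfalso; apply (Hemp g); auto.
  - destruct (ext4 (fun t => In t F) g1 g2 g3 g4 a1 a2 a3 G1 G2 G3 G4 A1 A2 A3 DG)
      as [h1 [h2 [h3 [h4 [H1 [H2 [H3 [H4 [DH Hc]]]]]]]]].
    pose proof (indep_of F h1 h2 h3 h4 Hnf H1 H2 H3 H4 DH) as Hind.
    destruct (LAsolve _ _ _ _ Hind (- del h1 * Qf x0 y0 x1 y1 - 1) (- del h2 * Qf x0 y0 x1 y1 - 1)
       (- del h3 * Qf x0 y0 x1 y1 - 1) (- del h4 * Qf x0 y0 x1 y1 - 1)) as [z0 [w0 [z1 [w1 [S1 [S2 [S3 S4]]]]]]].
    exists z0, w0, z1, w1. intros g Hg HL0.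
    destruct (Hc g (Ac g (conj Hg HL0))) as [E|[E|[E|E]]];
      rewrite (key_Lf g _ _ _ _ _ E), (key_del g _ E); unfold Lf;
      [rewrite S1|rewrite S2|rewrite S3|rewrite S4]; ring. }
destruct HY as [z0 [w0 [z1 [w1 HY]]]].
apply (curve F x0 y0 x1 y1 z0 w0 z1 w1 Hn); [|exact Hp].
intros g Hg; split; auto.
Qed.

Theorem lemma25 (F : list cparams) :
  (pins (map orth F) -> pins F) /\
  (pins F -> no_four_dependent F -> pins (map orth F)).
Proof.
split.
- intros H. apply pins_iff. apply part1. apply pins_iff. exact H.
- intros H Hn. apply pins_iff. apply part2; auto. apply pins_iff. exact H.
Qed.
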